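(* Let $(\mathcal{S},\mathcal{A},P,r)$ be an MDP with finite state and action spaces and $r\in[0,1]$, let $\gamma\in(0,1)$, and let $\pi$ be a stationary policy whose gain $\rho^\pi$ is a constant vector. Then $\|\frac1{1-\gamma}\rho^\pi-V^\pi_\gamma\|_\infty\le\|h^\pi\|_{\mathrm{sp}}$ and $\|V^\pi_\gamma\|_{\mathrm{sp}}\le2\|h^\pi\|_{\mathrm{sp}}$.
   Context: $V^\pi_\gamma(s)=\mathbb{E}^\pi_s[\sum_{t\ge0}\gamma^tr(S_t,A_t)]$. Gain $\rho^\pi(s)=\lim_T\frac1T\mathbb{E}^\pi_s[\sum_{t<T}r(S_t,A_t)]$; bias $h^\pi(s)=\mathrm{C}\text{-}\lim_T\mathbb{E}^\pi_s[\sum_{t<T}(r(S_t,A_t)-\rho^\pi(S_t))]$ (Cesàro limit). $\|x\|_{\mathrm{sp}}=\max_sx(s)-\min_sx(s)$. *)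

(* Defs.v *)
From HB Require Import structures.
From mathcomp Require Import all_boot all_order all_algebra.
From mathcomp Require Import all_classical all_reals all_analysis.
Set Implicit Arguments. Unset Strict Implicit. Unset Printing Implicit Defensive.
Import Order.TTheory GRing.Theory Num.Theory.
Import numFieldNormedType.Exports.
Local Open Scope ring_scope.

Section MDP.
Variables (R : realType) (S A : finType).
(* Transition kernel P s a s' = P(s' | s, a), reward r s a,
   stationary (possibly randomized) policy pi s a = pi(a | s). *)
Variables (P : S -> A -> S -> R) (r : S -> A -> R) (pi : S -> A -> R).

Definition is_kernel : Prop :=
  (forall s a s', 0 <= P s a s') /\ (forall s a, \sum_(s' : S) P s a s' = 1).
Definition is_policy : Prop :=
  (forall s a, 0 <= pi s a) /\ (forall s, \sum_(a : A) pi s a = 1).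

Definition Ppi (x : S -> R) : S -> R :=
  fun s => \sum_(a : A) pi s a * \sum_(s' : S) P s a s' * x s'.

Definition Ppow (t : nat) (x : S -> R) : S -> R := iter t Ppi x.

Definition rpi : S -> R := fun s => \sum_(a : A) pi s a * r s a.

(* E^pi_s[r(S_t, A_t)] *)
Definition Erew (t : nat) (s : S) : R := Ppow t rpi s.

Definition Vgamma (gamma : R) (s : S) : R :=
  limn (series (fun t => gamma ^+ t * Erew t s)).

Definition gain (s : S) : R :=
  limn (fun T : nat => (T%:R)^-1 * \sum_(t < T) Erew t s).

(* Bias h^pi(s) = C-lim_T E^pi_s[sum_{t<T} (r(S_t,A_t) - rho^pi(S_t))],
   Cesaro limit: lim_N (1/N) sum_{T=1}^{N} x_T. *)
Definition bias_partial (T : nat) (s : S) : R :=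
  \sum_(t < T) (Erew t s - Ppow t gain s).
Definition bias (s : S) : R :=
  limn (fun N : nat => (N%:R)^-1 * \sum_(k < N) bias_partial k.+1 s).
End MDP.

(* span seminorm: max_s x(s) - min_s x(s) = max_{s,s'} (x s - x s') *)
Definition spnorm (R : realType) (S : finType) (x : S -> R) : R :=
  \big[Num.max/0]_(s : S) \big[Num.max/0]_(s' : S) (x s - x s').

Definition infnorm (R : realType) (S : finType) (x : S -> R) : R :=
  \big[Num.max/0]_(s : S) `|x s|.

(* Main.v *)
Require Import Defs.
From HB Require Import structures.
From mathcomp Require Import all_boot all_order all_algebra.
From mathcomp Require Import all_classical all_reals all_analysis.
From mathcomp Require Import ring lra.
Import Order.TTheory GRing.Theory Num.Theory.
Import numFieldNormedType.Exports.
Local Open Scope ring_scope.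

Section Lim.
Variable R : realType.
Local Open Scope classical_set_scope.

Lemma cvg_avg (a : R) (b : nat -> R) B : (forall n, `|b n| <= B) ->
  (fun n => n%:R^-1 * (n%:R * a + b n)) @ \oo --> a.
Proof.
move=> Hb; rewrite -cvg_shiftS.
have E : (fun n => n.+1%:R^-1 * (n.+1%:R * a + b n.+1))
   = (fun n => a + b n.+1 * harmonic n).
  apply/funext => n /=; rewrite mulrDr mulrA mulVf ?mul1r ?pnatr_eq0 //; ring.
rewrite E.
have Hh : (fun n => B * harmonic n) @ \oo --> (0 : R).
  rewrite -(mulr0 B); apply: cvgMl_tmp; exact: cvg_harmonic.
have H0 : (fun n => b n.+1 * harmonic n) @ \oo --> (0 : R).
  apply: (@squeeze_cvgr _ _ _ _ (fun n => - (B * harmonic n)) (fun n => B * harmonic n)).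
  - apply: nearW => n; rewrite -ler_norml normrM (ger0_norm (harmonic_ge0 n)).
    apply: ler_wpM2r; [exact: harmonic_ge0 | exact: Hb].
  - rewrite -oppr0; exact: cvgN.
  - exact: Hh.
have := cvgD (cvg_cst a) H0; rewrite addr0; exact.
Qed.

Lemma lim_avg (a : R) (b : nat -> R) B : (forall n, `|b n| <= B) ->
  limn (fun n => n%:R^-1 * (n%:R * a + b n)) = a.
Proof. move=> Hb; apply: (cvg_lim (@Rhausdorff R)); exact: cvg_avg Hb. Qed.
End Lim.

Section Proofs.
Variables (R : realType) (S A : finType) (P : S -> A -> S -> R) (pi : S -> A -> R).
Hypotheses (HP : is_kernel P) (Hpi : is_policy pi).

Local Notation M := (Ppi P pi).
Local Notation Pw := (Ppow P pi).

Definition W s s' := \sum_(a : A) pi s a * P s a s'.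

Lemma W_ge0 s s' : 0 <= W s s'.
Proof. apply: sumr_ge0 => a _; apply: mulr_ge0; [exact: Hpi.1 | exact: HP.1]. Qed.

Lemma W_sum1 s : \sum_s' W s s' = 1.
Proof.
rewrite /W exchange_big /= -(Hpi.2 s); apply: eq_bigr => a _.
by rewrite -mulr_sumr HP.2 mulr1.
Qed.

Lemma MW x s : M x s = \sum_s' W s s' * x s'.
Proof.
rewrite /Ppi /W. under eq_bigr do rewrite mulr_sumr.
rewrite exchange_big /=; apply: eq_bigr => s' _.
rewrite mulr_suml; apply: eq_bigr => a _; by rewrite mulrA.
Qed.

Lemma M_add x y : M (fun s => x s + y s) = fun s => M x s + M y s.
Proof. apply/funext => s; rewrite !MW -big_split /=; apply: eq_bigr => s' _; by rewrite mulrDr. Qed.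
Lemma M_opp x : M (fun s => - x s) = fun s => - M x s.
Proof. apply/funext => s; rewrite !MW -sumrN; apply: eq_bigr => s' _; by rewrite mulrN. Qed.
Lemma M_cst c : M (fun _ => c) = fun _ => c.
Proof. apply/funext => s; by rewrite MW -mulr_suml W_sum1 mul1r. Qed.
Lemma M_sub x y : M (fun s => x s - y s) = fun s => M x s - M y s.
Proof. by rewrite M_add M_opp. Qed.
Lemma M_ge0 x : (forall s, 0 <= x s) -> forall s, 0 <= M x s.
Proof. move=> Hx s; rewrite MW; apply: sumr_ge0 => s' _; apply: mulr_ge0 => //; exact: W_ge0. Qed.
Lemma M_bound x B : (forall s, `|x s| <= B) -> forall s, `|M x s| <= B.
Proof.
move=> Hx s; rewrite MW; apply: le_trans (ler_norm_sum _ _ _) _.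
apply: (@le_trans _ _ (\sum_s' W s s' * B)).
  apply: ler_sum => s' _; rewrite normrM ger0_norm ?W_ge0 //.
  by apply: ler_wpM2l; [exact: W_ge0| exact: Hx].
by rewrite -mulr_suml W_sum1 mul1r.
Qed.

Lemma Pw_S t x : Pw t.+1 x = M (Pw t x). Proof. by []. Qed.
Lemma Pw_Sr t x : Pw t.+1 x = Pw t (M x). Proof. by rewrite /Ppow iterSr. Qed.
Lemma Pw_add t x y : Pw t (fun s => x s + y s) = fun s => Pw t x s + Pw t y s.
Proof. elim: t => [//|t IH]; by rewrite !Pw_S IH M_add. Qed.
Lemma Pw_opp t x : Pw t (fun s => - x s) = fun s => - Pw t x s.
Proof. elim: t => [//|t IH]; by rewrite !Pw_S IH M_opp. Qed.
Lemma Pw_sub t x y : Pw t (fun s => x s - y s) = fun s => Pw t x s - Pw t y s.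
Proof. by rewrite Pw_add Pw_opp. Qed.
Lemma Pw_fix t k : M k = k -> Pw t k = k.
Proof. move=> Hk; elim: t => [//|t IH]; by rewrite Pw_S IH Hk. Qed.
Lemma Pw_cst t c : Pw t (fun _ => c) = fun _ => c.
Proof. apply: Pw_fix; exact: M_cst. Qed.
Lemma Pw_ge0 t x : (forall s, 0 <= x s) -> forall s, 0 <= Pw t x s.
Proof. move=> Hx; elim: t => [//|t IH]; rewrite Pw_S; exact: M_ge0. Qed.
Lemma Pw_bound t x B : (forall s, `|x s| <= B) -> forall s, `|Pw t x s| <= B.
Proof. move=> Hx; elim: t => [//|t IH]; rewrite Pw_S; exact: M_bound. Qed.

Lemma tele (z : S -> R) n s :
  \sum_(t < n) (Pw t z s - Pw t.+1 z s) = z s - Pw n z s.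
Proof.
elim: n => [|n IH]; first by rewrite big_ord0 subrr.
rewrite big_ord_recr /= IH; ring.
Qed.

Lemma Pw_dec (k z : S -> R) t : M k = k ->
  Pw t (fun s => k s + (z s - M z s)) = fun s => k s + (Pw t z s - Pw t.+1 z s).
Proof. move=> Hk; by rewrite Pw_add Pw_fix // Pw_sub -Pw_Sr. Qed.

Lemma sum_dec (k z : S -> R) n s : M k = k ->
  \sum_(t < n) Pw t (fun s => k s + (z s - M z s)) s = n%:R * k s + (z s - Pw n z s).
Proof.
move=> Hk; under eq_bigr do rewrite Pw_dec //.
by rewrite big_split /= tele sumr_const card_ord mulr_natl.
Qed.

Definition zmax (z : S -> R) := \big[Num.max/0]_s `|z s|.
Lemma zmax_ge (z : S -> R) s : `|z s| <= zmax z.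
Proof. rewrite /zmax; exact: le_bigmax. Qed.

Lemma fix_range (z : S -> R) :
  M (fun s => z s - M z s) = (fun s => z s - M z s) -> forall s, z s - M z s = 0.
Proof.
move=> Hu s.
have Hn n : n%:R * (z s - M z s) = z s - Pw n z s.
  rewrite -tele.
  have -> : \sum_(t<n) (Pw t z s - Pw t.+1 z s) = \sum_(t<n) Pw t (fun s => z s - M z s) s.
    apply: eq_bigr => t _; by rewrite Pw_sub -Pw_Sr.
  under eq_bigr do rewrite Pw_fix //.
  by rewrite sumr_const card_ord mulr_natl.
apply/eqP; apply/negPn/negP => Hne.
set B := zmax z.
have Hv : 0 < `|z s - M z s| by rewrite normr_gt0.
have := truncnS_gt (2 * B / `|z s - M z s|).
set n := (Num.Def.trunc _).+1 => Hlt.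
have H1 : 2 * B < n%:R * `|z s - M z s| by rewrite -(ltr_pdivrMr _ _ Hv).
have H2 : `|n%:R * (z s - M z s)| <= 2 * B.
  rewrite Hn; apply: le_trans (ler_normB _ _) _.
  have := zmax_ge z s; have := @Pw_bound n z B (zmax_ge z) s; rewrite -/B; lra.
move: H2; rewrite normrM normr_nat; lra.
Qed.

Definition Lf (v : {ffun S -> R^o}) : {ffun S -> R^o} :=
  [ffun s => v s - \sum_s' W s s' * v s'].
Lemma Lf_lin : linear Lf.
Proof.
move=> a u v; apply/ffunP => s; rewrite !ffunE.
under eq_bigr do rewrite !ffunE mulrDr.
rewrite big_split /=.
have -> : \sum_s' W s s' * (a *: u s') = a * \sum_s' W s s' * u s'.
  rewrite mulr_sumr; apply: eq_bigr => s' _ /=; rewrite /GRing.scale /=; ring.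
rewrite /GRing.scale /=; ring.
Qed.
HB.instance Definition _ := GRing.isLinear.Build R _ _ _ Lf Lf_lin.

Lemma decomp (y : S -> R) :
  exists k z : S -> R, M k = k /\ y = fun s => k s + (z s - M z s).
Proof.
pose f := linfun Lf.
have fE v : f v = Lf v by rewrite lfunE.
have Hcap : (lker f :&: limg f = 0)%VS.
  apply/eqP; rewrite -subv0; apply/subvP => v /memv_capP [].
  rewrite memv_ker => /eqP Hk /memv_imgP [w _ Hw].
  have Hv s : v s = w s - M (fun s => w s) s by rewrite Hw fE ffunE MW.
  have Hv2 s : v s - M (fun s => v s) s = 0.
    by move/ffunP/(_ s): Hk; rewrite fE !ffunE MW.
  have Hfix : M (fun s => w s - M (fun s => w s) s) = (fun s => w s - M (fun s => w s) s).
    apply/funext => s. rewrite -Hv. 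
    have -> : (fun s => w s - M (fun s => w s) s) = (fun s => v s).
      by apply/funext => s'; rewrite Hv.
    by apply/eqP; rewrite eq_sym -subr_eq0 Hv2.
  rewrite memv0; apply/eqP/ffunP => s; rewrite ffunE Hv.
  exact: (fix_range (fun s => w s) Hfix s).
have Hsum : (lker f + limg f = fullv)%VS.
  apply/eqP; rewrite -(dimv_leqif_eq (subvf _)).2 dimv_disjoint_sum //.
  by rewrite -(limg_ker_dim f fullv) capfv addnC.
have /memv_addP [u Hu [v Hv Heq]] : [ffun s => y s : R^o] \in (lker f + limg f)%VS.
  by rewrite Hsum memvf.
move: Hv => /memv_imgP [w _ Hw].
exists (fun s => u s), (fun s => w s); split.
  apply/funext => s; move: Hu; rewrite memv_ker => /eqP Hu.
  move/ffunP/(_ s): Hu; rewrite fE !ffunE MW => /eqP.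
  by rewrite subr_eq0 => /eqP.
apply/funext => s; move/ffunP/(_ s): Heq.
by rewrite Hw fE !ffunE MW.
Qed.

Lemma M_between x m Mx : (forall s, m <= x s <= Mx) -> forall s, m <= M x s <= Mx.
Proof.
move=> H s; rewrite MW; apply/andP; split.
  rewrite -[m]mul1r -(W_sum1 s) mulr_suml; apply: ler_sum => s' _.
  by apply: ler_wpM2l; [exact: W_ge0 | case/andP: (H s')].
rewrite -[Mx]mul1r -(W_sum1 s) mulr_suml; apply: ler_sum => s' _.
by apply: ler_wpM2l; [exact: W_ge0 | case/andP: (H s')].
Qed.
Lemma Pw_between t x m Mx : (forall s, m <= x s <= Mx) -> forall s, m <= Pw t x s <= Mx.
Proof. move=> Hx; elim: t => [//|t IH]; rewrite Pw_S; exact: M_between. Qed.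

Local Open Scope classical_set_scope.
Lemma main_sec (r : S -> A -> R) (gamma : R) :
  (forall s a, 0 <= r s a <= 1) -> 0 < gamma < 1 ->
  (exists c : R, forall s, gain P r pi s = c) ->
  infnorm (fun s => (1 - gamma)^-1 * gain P r pi s - Vgamma P r pi gamma s)
    <= spnorm (bias P r pi)
  /\ spnorm (Vgamma P r pi gamma) <= 2 * spnorm (bias P r pi).
Proof.
move=> Hr /andP[g0 g1] [c Hc].
have [k [z [Hk Hx]]] := decomp (rpi r pi).
have gainE s : gain P r pi s = k s.
  rewrite /gain /Erew Hx.
  have -> : (fun T : nat => T%:R^-1 * \sum_(t < T) Pw t (fun s => k s + (z s - M z s)) s)
     = fun T : nat => T%:R^-1 * (T%:R * k s + (z s - Pw T z s)).
    by apply/funext => T; rewrite sum_dec.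
  apply: (@lim_avg _ _ _ (2 * zmax z)) => n.
  apply: le_trans (ler_normB _ _) _.
  have := zmax_ge z s; have := @Pw_bound n z _ (zmax_ge z) s; lra.
have kc s : k s = c by rewrite -gainE Hc.
have gainc : gain P r pi = fun _ => c by apply/funext.
have [k2 [z2 [Hk2 Hz2]]] := decomp (M z).
pose h := fun s => z s - k2 s.
have biasE : bias P r pi = h.
  apply/funext => s; rewrite /bias /bias_partial gainc.
  have -> : (fun N : nat => N%:R^-1 * \sum_(j < N) \sum_(t < j.+1) (Erew P r pi t s - Pw t (fun _ => c) s))
     = fun N : nat => N%:R^-1 * (N%:R * h s + - (z2 s - Pw N z2 s)).
    apply/funext => N; congr (_ * _).
    transitivity (\sum_(j < N) (z s - Pw j (M z) s)).
      apply: eq_bigr => j _; rewrite /Erew Hx.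
      under eq_bigr do rewrite Pw_dec // kc Pw_cst addrAC subrr add0r.
      by rewrite tele Pw_Sr.
    rewrite Hz2 sumrB sum_dec // sumr_const card_ord -mulr_natl /h; ring.
  apply: (@lim_avg _ _ _ (2 * zmax z2)) => n; rewrite normrN.
  apply: le_trans (ler_normB _ _) _.
  have := zmax_ge z2 s; have := @Pw_bound n z2 _ (zmax_ge z2) s; lra.
have rpiE : rpi r pi = fun s => c + (h s - M h s).
  rewrite Hx; apply/funext => s; rewrite kc /h M_sub Hk2; ring.
have ErewE t s : Erew P r pi t s = c + (Pw t h s - Pw t.+1 h s).
  by rewrite /Erew rpiE (Pw_dec (fun _ => c)) ?M_cst.
rewrite biasE.
set sp := spnorm h.
have sp_ge s1 s2 : h s1 - h s2 <= sp.
  rewrite /sp /spnorm.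
  apply: le_trans (le_bigmax 0 (fun s => \big[Num.max/0]_s' (h s - h s')) s1).
  exact: (le_bigmax 0 (fun s' => h s1 - h s') s2).
have sp0 : 0 <= sp by rewrite /sp /spnorm; exact: bigmax_ge_id.
have g1' : 0 < 1 - gamma by lra.
set ig := (1 - gamma)^-1.
have Hig : (1 - gamma) * ig = 1 by rewrite mulfV // gt_eqF.
have ig0 : 0 < ig by rewrite invr_gt0.
have Vbound s : `|ig * c - Vgamma P r pi gamma s| <= sp.
  have [smin _ Hmin] := @arg_minP _ _ _ s predT h isT.
  have [smax _ Hmax] := @arg_maxP _ _ _ s predT h isT.
  set m := h smin; set Mx := h smax.
  have hb s' : m <= h s' <= Mx by rewrite Hmin //; exact: (Hmax s').
  have Dsp : Mx - m <= sp by exact: sp_ge.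
  pose g t := Pw t h s.
  have gb t : m <= g t <= Mx by exact: Pw_between.
  have HQ T : \sum_(t < T) gamma ^+ t * (g t - g t.+1)
      = h s - (gamma ^+ T * g T + (1 - gamma) * \sum_(t < T) gamma ^+ t * g t.+1).
    elim: T => [|T IH]; first by rewrite !big_ord0 expr0 mul1r mulr0 addr0 subrr.
    rewrite !big_ord_recr /= IH exprS; ring.
  have Hw T : gamma ^+ T + (1 - gamma) * \sum_(t < T) gamma ^+ t = 1.
    elim: T => [|T IH]; first by rewrite big_ord0 expr0 mulr0 addr0.
    rewrite big_ord_recr /= exprS -[RHS]IH; ring.
  have gT0 T : 0 <= gamma ^+ T by apply: exprn_ge0; exact: ltW.
  have HW T : m <= gamma ^+ T * g T + (1 - gamma) * \sum_(t < T) gamma ^+ t * g t.+1 <= Mx.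
    apply/andP; split.
      have -> : m = gamma ^+ T * m + (1 - gamma) * \sum_(t < T) gamma ^+ t * m.
        by rewrite -mulr_suml mulrA -mulrDl Hw mul1r.
      apply: lerD; first by apply: ler_wpM2l => //; case/andP: (gb T).
      apply: ler_wpM2l; first exact: ltW.
      apply: ler_sum => t _; apply: ler_wpM2l => //; by case/andP: (gb t.+1).
    have -> : Mx = gamma ^+ T * Mx + (1 - gamma) * \sum_(t < T) gamma ^+ t * Mx.
      by rewrite -mulr_suml mulrA -mulrDl Hw mul1r.
    apply: lerD; first by apply: ler_wpM2l => //; case/andP: (gb T).
    apply: ler_wpM2l; first exact: ltW.
    apply: ler_sum => t _; apply: ler_wpM2l => //; by case/andP: (gb t.+1).
  pose Q T := \sum_(t < T) gamma ^+ t * (g t - g t.+1).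
  have Qb T : `|Q T| <= Mx - m.
    rewrite /Q HQ ler_norml; have := HW T; have := hb s; lra.
  pose u := fun t => gamma ^+ t * Erew P r pi t s.
  have Hser T : series u T = c * \sum_(t < T) gamma ^+ t + Q T.
    rewrite /series /= big_mkord mulr_sumr -big_split /=; apply: eq_bigr => t _.
    rewrite /u /g ErewE; ring.
  have HS T : \sum_(t < T) gamma ^+ t = ig * (1 - gamma ^+ T).
    have nz : 1 - gamma != 0 by rewrite gt_eqF.
    have E1 : (1 - gamma) * \sum_(t < T) gamma ^+ t = 1 - gamma ^+ T.
      rewrite -[in RHS](Hw T); ring.
    apply: (mulfI nz); by rewrite mulrA Hig mul1r.
  have Hcv : cvgn (series u).
    apply: nondecreasing_is_cvgn.
      move=> n1 n2 le12; rewrite /series /=.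
      apply: (nondecreasing_series (P:=predT) (m:=0%N)) => // n _ _.
      rewrite /u; apply: mulr_ge0 => //; rewrite /Erew; apply: Pw_ge0 => s'.
      rewrite /rpi; apply: sumr_ge0 => a _; apply: mulr_ge0; first exact: Hpi.1.
      by case/andP: (Hr s' a).
    exists (`|c| * ig + (Mx - m)) => _ [n _ <-].
    rewrite Hser; apply: lerD; last by apply: le_trans (ler_norm _) (Qb n).
    rewrite HS; apply: le_trans (ler_norm _) _; rewrite normrM.
    apply: ler_wpM2l => //; rewrite normrM (gtr0_norm ig0) ger0_norm; last first.
      by rewrite subr_ge0 exprn_ile1 // ltW.
    rewrite -[X in _ <= X]mulr1; apply: ler_wpM2l; first exact: ltW.
    have := gT0 n; lra.
  set L := Vgamma P r pi gamma s.
  have HL : series u @ \oo --> L by exact: Hcv.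
  have He : (fun T => ig * c - series u T - ig * c * gamma ^+ T) @ \oo --> ig * c - L - ig * c * 0.
    apply: cvgB; first by apply: cvgB => //; exact: cvg_cst.
    apply: cvgMl_tmp; apply: cvg_expr; rewrite ger0_norm // ltW //.
  rewrite mulr0 subr0 in He.
  have eQ T : ig * c - series u T - ig * c * gamma ^+ T = - Q T.
    rewrite Hser HS; ring.
  have HlimE := cvg_lim (@Rhausdorff R) He.
  rewrite ler_norml -HlimE; apply/andP; split.
    apply: limr_ge; first by apply/cvg_ex; exists (ig * c - L).
    apply: nearW => T; rewrite eQ; have := Qb T; rewrite ler_norml; lra.
  apply: limr_le; first by apply/cvg_ex; exists (ig * c - L).
  apply: nearW => T; rewrite eQ; have := Qb T; rewrite ler_norml; lra.
split.
  rewrite /infnorm; apply: bigmax_le => // s _; rewrite Hc; exact: Vbound.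
rewrite /spnorm; apply: bigmax_le => [|s1 _]; first by rewrite mulr_ge0.
apply: bigmax_le => [|s2 _]; first by rewrite mulr_ge0.
have := Vbound s1; have := Vbound s2; rewrite !ler_norml; lra.
Qed.
End Proofs.


Theorem lemma25 (R : realType) (S A : finType)
  (P : S -> A -> S -> R) (r : S -> A -> R) (pi : S -> A -> R) (gamma : R) :
  is_kernel P -> is_policy pi ->
  (forall s a, 0 <= r s a <= 1) ->
  0 < gamma < 1 ->
  (exists c : R, forall s, gain P r pi s = c) ->
  infnorm (fun s => (1 - gamma)^-1 * gain P r pi s - Vgamma P r pi gamma s)
    <= spnorm (bias P r pi)
  /\ spnorm (Vgamma P r pi gamma) <= 2 * spnorm (bias P r pi).
Proof. move=> HP Hpi; exact: main_sec. Qed.
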